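(* Let $M$ be a gasket automaton over $\Sigma=\{1,\dots,N\}$ and let $0<\xi<1$. Then $(\Sigma^\infty,\rho_{M,\xi})$ is a pseudo-quasimetric space; that is, for all $\mathbf x,\mathbf y,\mathbf z\in\Sigma^\infty$: $\rho_{M,\xi}(\mathbf x,\mathbf x)=0$, $\rho_{M,\xi}(\mathbf x,\mathbf y)=\rho_{M,\xi}(\mathbf y,\mathbf x)$, and there is a constant $C\ge 1$ independent of $\mathbf x,\mathbf y,\mathbf z$ with $\rho_{M,\xi}(\mathbf x,\mathbf z)\le C(\rho_{M,\xi}(\mathbf x,\mathbf y)+\rho_{M,\xi}(\mathbf y,\mathbf z))$.
   Context: $\Sigma^\infty$ is the set of infinite words $\mathbf x=x_1x_2\cdots$ over $\Sigma$. A $\Sigma$-automaton $M$ has finite state set $Q=Q_0\cup\{Id,Exit\}$, input alphabet $\Sigma^2$, initial state $Id$, final state $Exit$, and transition function $\delta:Q\times\Sigma^2\to Q$ with $\delta(Id,(i,j))=Id$ iff $i=j$. For $(\mathbf x,\mathbf y)\in\Sigma^\infty\times\Sigma^\infty$ the itinerary is $S_0=Id$, $S_k=\delta(S_{k-1},(x_k,y_k))$, stopped when $Exit$ is reached. The surviving time $T_M(\mathbf x,\mathbf y)\in\{0,1,2,\dots\}\cup\{\infty\}$ is the largest $k$ with $S_k\neq Exit$ ($\infty$ if $Exit$ is never reached), and $\rho_{M,\xi}(\mathbf x,\mathbf y)=\xi^{T_M(\mathbf x,\mathbf y)}$ with $\xi^\infty=0$. Triangle automaton: let $\alpha,\beta,\gamma$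 be three distinct elements of $\Sigma\cup\{-1,-2,-3\}$; $M$ is a $\Sigma$-automaton with $Q=\{S_{uv}:u,v\in\{\alpha,\beta,\gamma\},u\ne v\}\cup\{Id,Exit\}$ such that (i) if $\delta(Id,(i,j))=S_{uv}$ then $\delta(Id,(j,i))=S_{vu}$; (ii) $\delta(S_{uv},(i,j))=S_{uv}$ if $(i,j)=(v,u)$ and $=Exit$ otherwise; also $\delta(Exit,\cdot)=Exit$. Let $\mathcal P_{uv}=\{(i,j)\in\Sigma^2:\delta(Id,(i,j))=S_{uv}\}$ and write $i\triangleleft_{uv}j$ iff $(i,j)\in\mathcal P_{uv}$ (so $i\triangleleft_{uv}j$ iff $j\triangleleft_{vu}i$). A symbol $j$ is $uv$-minimal if there is no $i$ with $i\triangleleft_{uv}j$, $uv$-maximal if there is no $k$ with $j\triangleleft_{uv}k$, and $uv$-isolated if both. Gasket automaton: a triangle automaton such that for all distinct $u,v\in\{\alpha,\beta,\gamma\}$: (Uniqueness) $i\triangleleft_{uv}j$ and $i\triangleleft_{uv}j'$ imply $j=j'$; (Gathering) for $a,b,c\in\Sigma$, any two of $a\triangleleft_{\alpha\gamma}c$, $a\triangleleft_{\beta\gamma}b$, $b\triangleleft_{\alpha\beta}c$ imply the third; (Boundary) if $\alpha\in\Sigma$ then $\alpha$ is $\alpha\gamma$-minimal and $\alpha\beta$-minimal; if $\beta\in\Sigma$ then $\beta$ is $\beta\gamma$-minimal and $\beta\alpha$-minimal; if $\gamma\in\Sigma$ then $\gamma$ is $\gamma\alpha$-minimal and $\gamma\beta$-minimal.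 *)

(* Defs.v *)
From mathcomp Require Import all_boot all_order all_algebra.
From mathcomp Require Import boolp.
Set Implicit Arguments. Unset Strict Implicit. Unset Printing Implicit Defensive.
Import Order.TTheory GRing.Theory Num.Theory.
Local Open Scope ring_scope.

(* Alphabet Sigma = {1,...,N} is modelled by 'I_N (relabelling k <-> k-1).
   Labels alpha, beta, gamma live in Sigma ∪ {-1,-2,-3}, modelled by
   'I_N + 'I_3 (inl = a symbol of Sigma, inr = one of the three extra labels). *)
Definition label (N : nat) := ('I_N + 'I_3)%type.

Inductive tstate (L : Type) := TId | TExit | TS of L & L.
Arguments TId {L}. Arguments TExit {L}.

Definition is_exit L (s : tstate L) : bool := if s is TExit then true else false.

Section Auto.
Variable N : nat.
Variable delta : tstate (label N) -> 'I_N -> 'I_N -> tstate (label N).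

Definition in_abc (a b c u : label N) : Prop := u = a \/ u = b \/ u = c.

Definition lhd (u v : label N) (i j : 'I_N) : Prop := delta TId i j = TS u v.

Definition uv_minimal (u v : label N) (j : 'I_N) : Prop := forall i, ~ lhd u v i j.
Definition uv_maximal (u v : label N) (j : 'I_N) : Prop := forall k, ~ lhd u v j k.

Definition triangle_automaton (a b c : label N) : Prop :=
  [/\ a <> b, a <> c & b <> c] /\
   (forall i j, delta TId i j = TId <-> i = j) /\
   (forall i j, delta TId i j = TId \/ delta TId i j = TExit \/
      exists u v, [/\ in_abc a b c u, in_abc a b c v, u <> v & delta TId i j = TS u v]) /\
   (forall i j u v, delta TId i j = TS u v -> delta TId j i = TS v u) /\
   (forall u v, in_abc a b c u -> in_abc a b c v -> u <> v ->
      forall i j, delta (TS u v) i j =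
        (if (inl i == v) && (inl j == u) then TS u v else TExit)) /\
   (forall i j, delta TExit i j = TExit).

Definition boundary_at (u v w : label N) : Prop :=
  match u with inl s => uv_minimal u w s /\ uv_minimal u v s | inr _ => True end.

Definition gasket_automaton (a b c : label N) : Prop :=
  [/\ triangle_automaton a b c,
   (forall u v, in_abc a b c u -> in_abc a b c v -> u <> v ->
      forall i j j', lhd u v i j -> lhd u v i j' -> j = j'),
   (forall x y z : 'I_N,
      [/\ lhd a c x z -> lhd b c x y -> lhd a b y z,
          lhd a c x z -> lhd a b y z -> lhd b c x y &
          lhd b c x y -> lhd a b y z -> lhd a c x z])
   &
   [/\ boundary_at a c b, boundary_at b c a & boundary_at c a b]].

(* Infinite words x = x_1 x_2 ... : x k is the letter x_{k+1}. *)
Fixpoint itin (x y : nat -> 'I_N) (k : nat) : tstate (label N) :=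
  match k with
  | 0 => TId
  | k'.+1 => delta (itin x y k') (x k') (y k')
  end.

(* rho_{M,xi}(x,y) = xi ^ T(x,y), with xi^oo = 0.  Since Exit is absorbing
   and S_0 = Id, the largest k with S_k <> Exit is (first exit time) - 1. *)
Definition rho (R : numDomainType) (xi : R) (x y : nat -> 'I_N) : R :=
  match pselect (exists k, is_exit (itin x y k)) with
  | left h => xi ^+ (ex_minn h).-1
  | right _ => 0
  end.
End Auto.

(* Main.v *)
Require Import Defs.
From mathcomp Require Import all_boot all_order all_algebra.
From mathcomp Require Import boolp reals.
Import Order.TTheory GRing.Theory Num.Theory.
Set Implicit Arguments. Unset Strict Implicit.

Definition valid N (a b c u v : label N) := [/\ in_abc a b c u, in_abc a b c v & u <> v].

Lemma reach N delta (a b c : label N) (H : gasket_automaton delta a b c) x y k :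
  itin delta x y k = TId \/ itin delta x y k = TExit \/
  exists u v, valid a b c u v /\ itin delta x y k = TS u v.
Proof.
case: H => [[_ [Hid [HQ [Hfl [Hii Hex]]]]] _ _ _].
elim: k => [|k IH] /=; first by left.
case: IH => [->|[->|[u [v [[hu hv huv] ->]]]]].
- case: (HQ (x k) (y k)) => [->|[->|[u [v [hu hv huv ->]]]]]; auto.
  by right; right; exists u, v.
- by rewrite Hex; auto.
- rewrite Hii //; case: ifP => _; auto.
  by right; right; exists u, v.
Qed.

Lemma stayS N delta (a b c : label N) (H : gasket_automaton delta a b c) x y k u v :
  valid a b c u v -> itin delta x y k = TS u v -> ~~ is_exit (itin delta x y k.+1) ->
  [/\ itin delta x y k.+1 = TS u v, inl (x k) = v & inl (y k) = u].
Proof.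
case: H => [[_ [Hid [HQ [Hfl [Hii Hex]]]]] _ _ _] [hu hv huv] E /=.
rewrite E Hii //; case: ifP => //; by case/andP => /eqP -> /eqP ->.
Qed.

Lemma mono N delta (a b c : label N) (H : gasket_automaton delta a b c) x y k :
  is_exit (itin delta x y k) -> is_exit (itin delta x y k.+1).
Proof.
case: H => [[_ [Hid [HQ [Hfl [Hii Hex]]]]] _ _ _] /=.
by case: (itin delta x y k) => //= _; rewrite Hex.
Qed.

Lemma bnd N delta (a b c : label N) (H : gasket_automaton delta a b c) u w s t :
  valid a b c u w -> u = inl s -> ~ lhd delta u w t s.
Proof.
case: H => [_ _ _ [Ba Bb Bc]] [hu hw huw] us.
move: hu hw huw; rewrite /in_abc.
case=> [E|[E|E]]; rewrite E in us; subst u;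
 rewrite us /boundary_at in Ba Bb Bc *;
 case=> [->|[->|->]] // _; rewrite ?us;
 match goal with | B : _ /\ _ |- _ => case: B => B1 B2 end; by [apply: B1 | apply: B2].
Qed.
Lemma gath N delta (a b c : label N) (H : gasket_automaton delta a b c) u v w i j l :
  valid a b c u v -> valid a b c w u -> w <> v ->
  lhd delta u v i j -> lhd delta w u j l -> lhd delta w v i l.
Proof.
case: H => [[_ [Hid [HQ [Hfl [Hii Hex]]]]] _ G _] [hu hv huv] [hw _ hwu] hwv H1 H2.
have F1 := Hfl _ _ _ _ H1; have F2 := Hfl _ _ _ _ H2.
suff: lhd delta v w l i \/ lhd delta w v i l by case=> // /Hfl.
have := G i j l; have := G i l j; have := G j i l; have := G j l i;
have := G l i j; have := G l j i.
move: hu hv hw huv hwu hwv H1 H2 F1 F2; rewrite /in_abc /lhd.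
case=> [->|[->|->]]; case=> [->|[->|->]]; case=> [->|[->|->]] => // *; first [by exfalso; congruence | (repeat match goal with H : and3 _ _ _ |- _ => case: H => ? ? ? end); tauto].
Qed.
Definition Rinv N (s1 s2 s3 : tstate (label N)) :=
  (s1 = TId /\ s3 = s2) \/ (s2 = TId /\ s3 = s1) \/
  exists u v w, [/\ s1 = TS u v, s2 = TS w u & s3 = if w == v then TId else TS w v].

Lemma inv N delta (a b c : label N) (H : gasket_automaton delta a b c) x y z k :
  ~~ is_exit (itin delta x y k.+1) -> ~~ is_exit (itin delta y z k.+1) ->
  Rinv (itin delta x y k) (itin delta y z k) (itin delta x z k).
Proof.
have [[_ [Hid [HQ [Hfl [Hii Hex]]]]] U _ _] := H.
have mo := mono H.
elim: k => [|k IH] ne1 ne2; first by left.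
have ne1' : ~~ is_exit (itin delta x y k.+1) by apply: contra ne1; apply: mo.
have ne2' : ~~ is_exit (itin delta y z k.+1) by apply: contra ne2; apply: mo.
have ne1'' : ~~ is_exit (itin delta x y k) by apply: contra ne1'; apply: mo.
have ne2'' : ~~ is_exit (itin delta y z k) by apply: contra ne2'; apply: mo.
have {IH} R := IH ne1' ne2'.
have E1 : itin delta x y k.+1 = delta (itin delta x y k) (x k) (y k) by [].
have E2 : itin delta y z k.+1 = delta (itin delta y z k) (y k) (z k) by [].
have E3 : itin delta x z k.+1 = delta (itin delta x z k) (x k) (z k) by [].
have enter : forall p q (s : 'I_N) t, delta TId s t = itin delta p q k.+1 ->
    ~~ is_exit (itin delta p q k.+1) -> s <> t ->
    exists u v, valid a b c u v /\ itin delta p q k.+1 = TS u v.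
  move=> p q s t e ne st; case: (HQ s t) => [/Hid//|[e'|[u [v [hu hv huv e']]]]].
    by rewrite -e e' in ne.
  by exists u, v; rewrite -e e'.
case: (reach H x y k) => [s1|[s1|[u [v [vuv s1]]]]]; last 1 first.
-
  have [s1' xk yk] := stayS H vuv s1 ne1'.
  case: (reach H y z k) => [s2|[s2|[w [t [vwt s2]]]]]; last 1 first.
  + case: R => [[]|[[]|[u0 [v0 [w0 []]]]]]; rewrite ?s1 ?s2 //.
    case=> e1 e2 [e3 e4] s3; subst u0 v0 w0; subst t.
    have [s2' _ zk] := stayS H vwt s2 ne2'.
    right; right; exists u, v, w; split => //.
    rewrite E3 s3; case: eqP => [wv|wv].
      rewrite Hid; have : (inl (x k) : label N) = inl (z k) by rewrite xk zk wv. by case.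
    case: vuv => hu hv _; case: vwt => hw _ _.
    by rewrite Hii // xk zk !eqxx.
  + have s3 : itin delta x z k = itin delta x y k.
      by case: R => [[e1 e3]|[[e2 e3]|[u0 [v0 [w0 [e1 e2 e3]]]]]]; first [exact e3 | congruence].
    case: (eqVneq (y k) (z k)) => [yz|yz].
      right; left; rewrite E2 s2 yz (proj2 (Hid _ _)) //; split => //.
      by rewrite E3 s3 E1 yz.
    have [w [t [vwt s2']]] : exists u v, valid a b c u v /\ itin delta y z k.+1 = TS u v.
      apply: (enter y z (y k) (z k)); [by rewrite E2 s2 | exact: ne2' | exact/eqP].
    have [_ _ yk1] := stayS H vuv s1' ne1.
    have [_ yk1' _] := stayS H vwt s2' ne2.
    have tu : t = u by rewrite -yk1 -yk1'.
    exfalso; apply: (bnd H (u := u) (w := w) (s := y k) (t := z k)).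
    * by case: vwt => hw ht wt; split => //; rewrite -tu; auto.
    * by [].
    * by apply: Hfl; rewrite /lhd -tu -s2' E2 s2.
  + by rewrite s2 in ne2''.
-
  have s3 : itin delta x z k = itin delta y z k.
    by case: R => [[e1 e3]|[[e2 e3]|[u0 [v0 [w0 [e1 e2 e3]]]]]]; first [exact e3 | congruence].
  case: (eqVneq (x k) (y k)) => [xy|xy].
    left; rewrite E1 s1 xy (proj2 (Hid _ _)) //; split => //.
    by rewrite E3 s3 E2 xy.
  have [u [v [vuv s1']]] : exists u v, valid a b c u v /\ itin delta x y k.+1 = TS u v.
    apply: (enter x y (x k) (y k)); [by rewrite E1 s1 | exact: ne1' | exact/eqP].
  have [_ _ yk1] := stayS H vuv s1' ne1.
  case: (reach H y z k) => [s2|[s2|[w [t [vwt s2]]]]]; last 1 first.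
  + exfalso.
    have [s2' yk zk] := stayS H vwt s2 ne2'.
    have [_ yk1' _] := stayS H vwt s2' ne2.
    have tu : t = u by rewrite -yk1 -yk1'.
    apply: (bnd H (u := u) (w := v) (s := y k) (t := x k)) => //.
      by rewrite -tu.
    by rewrite /lhd -s1' E1 s1.
  + case: (eqVneq (y k) (z k)) => [yz|yz].
      right; left; rewrite E2 s2 yz (proj2 (Hid _ _)) //; split => //.
      by rewrite E3 s3 s2 E1 s1 yz.
    have [w [t [vwt s2']]] : exists u v, valid a b c u v /\ itin delta y z k.+1 = TS u v.
      apply: (enter y z (y k) (z k)); [by rewrite E2 s2 | exact: ne2' | exact/eqP].
    have [_ yk1' _] := stayS H vwt s2' ne2.
    have tu : t = u by rewrite -yk1 -yk1'.
    rewrite tu in vwt s2'.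
    have L1 : lhd delta u v (x k) (y k) by rewrite /lhd -s1' E1 s1.
    have L2 : lhd delta w u (y k) (z k) by rewrite /lhd -s2' E2 s2.
    right; right; exists u, v, w; split => //.
    rewrite E3 s3 s2; case: eqP => [wv|wv].
      apply/Hid; move: (Hfl _ _ _ _ L1) L2; rewrite wv => L1' L2.
      case: vuv => hu hv huv.
      by apply: (U v u hv hu (nesym huv) (y k)).
    by apply: (gath H vuv vwt wv L1 L2).
  + by rewrite s2 in ne2''.
- by rewrite s1 in ne1''.
Qed.

Lemma claim N delta (a b c : label N) (H : gasket_automaton delta a b c) x y z k :
  ~~ is_exit (itin delta x y k.+1) -> ~~ is_exit (itin delta y z k.+1) ->
  ~~ is_exit (itin delta x z k).
Proof.
move=> n1 n2; have := inv H n1 n2; have mo := mono H.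
have n2' : ~~ is_exit (itin delta y z k) by apply: contra n2; apply: mo.
have n1' : ~~ is_exit (itin delta x y k) by apply: contra n1; apply: mo.
case=> [[_ ->]|[[_ ->]|[u [v [w [_ _ ->]]]]]] //; by case: eqP.
Qed.
Local Open Scope ring_scope.

Definition swp L (s : tstate L) := match s with TS u v => TS v u | s => s end.

Lemma itin_swap N delta (a b c : label N) (H : gasket_automaton delta a b c) x y k :
  itin delta y x k = swp (itin delta x y k).
Proof.
have [[_ [Hid [HQ [Hfl [Hii Hex]]]]] _ _ _] := H.
elim: k => [//|k IH].
rewrite /= IH.
case: (reach H x y k) => [->|[->|[u [v [[hu hv huv] ->]]]]] /=.
- case: (HQ (x k) (y k)) => [e|[e|[u [v [_ _ _ e]]]]].
  + by move/Hid: (e) => exy; rewrite e exy (proj2 (Hid _ _)).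
  + rewrite e /=; case: (HQ (y k) (x k)) => [e'|[e'|[u [v [_ _ _ e']]]]] //.
    * by move/Hid: e' => exy; rewrite exy in e; rewrite (proj2 (Hid _ _)) in e.
    * by rewrite (Hfl _ _ _ _ e') in e.
  + by rewrite e (Hfl _ _ _ _ e).
- by rewrite !Hex.
- rewrite !Hii //; last by apply: nesym.
  by rewrite andbC; case: ifP.
Qed.

Lemma rho_ext N (delta : tstate (label N) -> 'I_N -> 'I_N -> tstate (label N)) (R : numDomainType) (xi : R) (x y x' y' : nat -> 'I_N) :
  (forall k, is_exit (itin delta x y k) = is_exit (itin delta x' y' k)) ->
  rho delta xi x y = rho delta xi x' y'.
Proof.
move=> E; rewrite /rho; case: pselect => h; case: pselect => h'.
- by congr (xi ^+ (_).-1); apply: eq_ex_minn.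
- by exfalso; apply: h'; case: h => k hk; exists k; rewrite -E.
- by exfalso; apply: h; case: h' => k hk; exists k; rewrite E.
- by [].
Qed.

Lemma rho_ge0 N (delta : tstate (label N) -> 'I_N -> 'I_N -> tstate (label N)) (R : numDomainType) (xi : R) (x y : nat -> 'I_N) :
  0 < xi -> 0 <= rho delta xi x y.
Proof.
move=> xi0; rewrite /rho; case: pselect => h //.
by rewrite exprn_ge0 // ltW.
Qed.

Lemma rho_lb N (delta : tstate (label N) -> 'I_N -> 'I_N -> tstate (label N)) (R : numDomainType) (xi : R) (x y : nat -> 'I_N) n :
  0 < xi <= 1 -> is_exit (itin delta x y n) -> xi ^+ n.-1 <= rho delta xi x y.
Proof.
move=> /andP [xi0 xi1] hn; rewrite /rho; case: pselect => h; last first.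
  by exfalso; apply: h; exists n.
case: ex_minnP => m _ mmin.
apply: ler_wiXn2l => //; first exact: ltW.
by rewrite -!subn1 leq_sub2r //; exact: mmin.
Qed.
Unset Implicit Arguments. Set Strict Implicit.

Theorem theorem1p1 (N : nat)
  (delta : tstate (label N) -> 'I_N -> 'I_N -> tstate (label N))
  (a b c : label N) (R : realType) (xi : R) :
  gasket_automaton delta a b c -> 0 < xi < 1 ->
  [/\ (forall x : nat -> 'I_N, rho delta xi x x = 0),
      (forall x y : nat -> 'I_N, rho delta xi x y = rho delta xi y x) &
      exists C : R, 1 <= C /\
        forall x y z : nat -> 'I_N,
          rho delta xi x z <= C * (rho delta xi x y + rho delta xi y z)].
Proof.
move=> H /andP [xi0 xi1].
have [[_ [Hid _]] _ _ _] := H.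
split.
- move=> x; rewrite /rho; case: pselect => // h; exfalso; case: h => k.
  suff -> : itin delta x x k = TId by [].
  by elim: k => //= k ->; apply/Hid.
- move=> x y; apply: rho_ext => k; rewrite (itin_swap H x y k).
  by case: (itin delta x y k).
- exists xi^-1; split; first by rewrite invf_ge1 // ltW.
  move=> x y z.
  have g1 := rho_ge0 delta x y xi0; have g2 := rho_ge0 delta y z xi0.
  rewrite {1}/rho; case: pselect => h; last first.
    by rewrite mulr_ge0 ?addr_ge0 // invr_ge0 ltW.
  case: ex_minnP => e He _.
  case: e He => [//|e] He /=.
  have xi1' : 0 < xi <= 1 by rewrite xi0 ltW.
  have : is_exit (itin delta x y e.+2) || is_exit (itin delta y z e.+2).
    apply: contraT; rewrite negb_or => /andP [n1 n2].
    by move: (claim H n1 n2); rewrite He.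
  have -> : xi ^+ e = xi^-1 * xi ^+ e.+1 by rewrite exprS mulKf // gt_eqF.
  have xv : 0 <= xi^-1 by rewrite invr_ge0 ltW.
  case/orP => E.
  + have := rho_lb xi1' E => /= L.
    apply: (le_trans (ler_wpM2l xv L)); apply: ler_wpM2l => //.
    by rewrite lerDl.
  + have := rho_lb xi1' E => /= L.
    apply: (le_trans (ler_wpM2l xv L)); apply: ler_wpM2l => //.
    by rewrite lerDr.
Qed.
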